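(* Let $(X,U)$ be a measurable space, $\mu:U\to B_2$ a measure, and $f_n:X\to B_2$ ($n\in\mathbb N$) measurable functions converging decreasingly to $0$, i.e. $\mathrm{supp}\,f_0\supset\mathrm{supp}\,f_1\supset\cdots$ and $\bigcap_n\mathrm{supp}\,f_n=\emptyset$. Then the binary sequence $\int f_n\,d\mu=\mu(\mathrm{supp}\,f_n)$ converges to $0$.
   Context: $B_2=\{0,1\}$. A measurable space $(X,U)$: $U\subset2^X$ non-empty, closed under symmetric difference and intersection. $f:X\to B_2$ is measurable if $\mathrm{supp}\,f=\{x:f(x)=1\}\in U$, and $\int f\,d\mu=\mu(\mathrm{supp}\,f)$. $\mu$ is a measure if for every sequence of pairwise disjoint sets of $U$ whose union is in $U$, only finitely many have $\mu$-value 1 and $\mu$ of the union is their number modulo 2. A binary sequence converges to $0$ if it is eventually equal to $0$. *)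

(* Defs.v *)
(* Sets are predicates X -> Prop; B_2 = bool (true = 1). *)
From Stdlib Require Import Arith.

Definition symdiff {X : Type} (A B : X -> Prop) : X -> Prop :=
  fun x => (A x /\ ~ B x) \/ (B x /\ ~ A x).

Definition inter {X : Type} (A B : X -> Prop) : X -> Prop :=
  fun x => A x /\ B x.

Definition is_measurable_space {X : Type} (U : (X -> Prop) -> Prop) : Prop :=
  (exists A, U A) /\
  (forall A B, U A -> U B -> U (symdiff A B)) /\
  (forall A B, U A -> U B -> U (inter A B)).

Definition supp {X : Type} (f : X -> bool) : X -> Prop := fun x => f x = true.

Definition measurable_fun {X : Type} (U : (X -> Prop) -> Prop) (f : X -> bool) : Prop :=
  U (supp f).

(* parity of the number of i < N with b i = true (sum in B_2 = Z/2) *)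
Fixpoint parity_upto (b : nat -> bool) (N : nat) : bool :=
  match N with
  | 0 => false
  | S n => xorb (parity_upto b n) (b n)
  end.

Definition bigunion {X : Type} (A : nat -> X -> Prop) : X -> Prop :=
  fun x => exists n, A n x.

Definition pairwise_disjoint {X : Type} (A : nat -> X -> Prop) : Prop :=
  forall i j x, i <> j -> A i x -> A j x -> False.

(* mu : U -> B_2 is a measure (values of mu outside U are irrelevant). *)
Definition is_measure {X : Type} (U : (X -> Prop) -> Prop) (mu : (X -> Prop) -> bool) : Prop :=
  forall A : nat -> X -> Prop,
    (forall n, U (A n)) -> pairwise_disjoint A -> U (bigunion A) ->
    (exists N, forall n, N <= n -> mu (A n) = false) /\
    (forall N, (forall n, N <= n -> mu (A n) = false) ->
               mu (bigunion A) = parity_upto (fun n => mu (A n)) N).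

Definition integral {X : Type} (f : X -> bool) (mu : (X -> Prop) -> bool) : bool :=
  mu (supp f).

(* a binary sequence converges to 0 iff it is eventually 0 *)
Definition bin_cvg0 (b : nat -> bool) : Prop :=
  exists N, forall n, N <= n -> b n = false.

(* Main.v *)
Require Import Defs.
From Stdlib Require Import Arith Lia FunctionalExtensionality PropExtensionality Classical.

Theorem corollary7p10 (X : Type) (U : (X -> Prop) -> Prop) (mu : (X -> Prop) -> bool)
  (f : nat -> X -> bool) :
  is_measurable_space U ->
  is_measure U mu ->
  (forall n, measurable_fun U (f n)) ->
  (forall n x, supp (f (S n)) x -> supp (f n) x) ->
  (forall x, ~ (forall n, supp (f n) x)) ->
  bin_cvg0 (fun n => integral (f n) mu).
Proof.
  intros [_ [Hsd _]] Hmu Hf Hdec Hempty.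
  unfold supp in *.
  assert (mono : forall i j x, i <= j -> f j x = true -> f i x = true).
  { intros i j x Hij; induction Hij; auto. }
  set (A := fun n => symdiff (supp (f n)) (supp (f (S n)))).
  assert (HA : forall n x, A n x <-> f n x = true /\ f (S n) x <> true).
  { intros n x; unfold A, symdiff, supp; split.
    - intros [[h1 h2]|[h1 h2]]; [auto|]. exfalso; apply h2; auto.
    - intros [h1 h2]; left; auto. }
  assert (HU : forall n, U (A n)) by (intro n; apply Hsd; apply Hf).
  assert (Hdisj : forall m, pairwise_disjoint (fun k => A (m + k))).
  { intros m i j x Hij Hi Hj. apply HA in Hi. apply HA in Hj.
    destruct Hi as [Hi1 Hi2], Hj as [Hj1 Hj2].
    destruct (Nat.lt_total i j) as [H|[H|H]]; [|contradiction|].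
    - apply Hi2; apply (mono _ (m+j)); [lia|auto].
    - apply Hj2; apply (mono _ (m+i)); [lia|auto]. }
  assert (step : forall x d m, f m x = true -> f (m + d) x <> true ->
                 exists k, A (m + k) x).
  { intros x d; induction d; intros m Hm Hd.
    - rewrite Nat.add_0_r in Hd; contradiction.
    - destruct (f (S m) x) eqn:E.
      + destruct (IHd (S m) E) as [k Hk].
        { replace (S m + d) with (m + S d) by lia; auto. }
        exists (S k). replace (m + S k) with (S m + k) by lia; auto.
      + exists 0. apply HA. rewrite Nat.add_0_r. split; auto. congruence. }
  assert (Hunion : forall m, bigunion (fun k => A (m + k)) = supp (f m)).
  { intro m. apply functional_extensionality; intro x.
    apply propositional_extensionality. unfold bigunion, supp. split.
    - intros [k Hk]. apply HA in Hk. destruct Hk as [Hk _].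
      apply (mono m (m+k)); [lia|auto].
    - intros Hm.
      destruct (not_all_ex_not _ _ (Hempty x)) as [n Hn].
      apply (step x n m Hm). intro H. apply Hn. apply (mono n (m+n)); [lia|auto]. }
  assert (HUm : forall m, U (bigunion (fun k => A (m + k)))).
  { intro m; rewrite Hunion; apply Hf. }
  destruct (Hmu (fun k => A (0 + k)) (fun k => HU _) (Hdisj 0) (HUm 0)) as [[N HN] _].
  exists N. intros n Hn. unfold integral.
  destruct (Hmu (fun k => A (n + k)) (fun k => HU _) (Hdisj n) (HUm n)) as [_ H2].
  rewrite <- (Hunion n). rewrite (H2 0); [reflexivity|].
  intros k _. apply (HN (n + k)). lia.
Qed.
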